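(* If $p,q\in\mathbf P(S)$ for a DRC-semigroup $S$, then the following are equivalent: (i) $pq=qp$; (ii) $p\theta_q=q\theta_p$ and $p\delta_q=q\delta_p$; (iii) $p\theta_q=q\theta_p=p\delta_q=q\delta_p$; (iv) $p\theta_q=q\theta_p=p\delta_q=q\delta_p=pq=qp$.
   Context: A DRC-semigroup is $(S,\cdot,D,R)$, $(S,\cdot)$ a semigroup, $D,R:S\to S$ with, for all $a,b$: $D(a)a=a$, $aR(a)=a$; $D(ab)=D(aD(b))$, $R(ab)=R(R(a)b)$; $D(ab)=D(a)D(ab)D(a)$, $R(ab)=R(b)R(ab)R(b)$; $R(D(a))=D(a)$, $D(R(a))=R(a)$. $\mathbf P(S)=\{D(a):a\in S\}$, and for $p,q\in\mathbf P(S)$: $q\theta_p=R(qp)$, $q\delta_p=D(pq)$. *)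

(* Defs.v *)
Record DRCSemigroup := {
  carrier :> Type;
  mul : carrier -> carrier -> carrier;
  Dop : carrier -> carrier;
  Rop : carrier -> carrier;
  mul_assoc : forall a b c, mul a (mul b c) = mul (mul a b) c;
  D_left_id : forall a, mul (Dop a) a = a;
  R_right_id : forall a, mul a (Rop a) = a;
  D_mul : forall a b, Dop (mul a b) = Dop (mul a (Dop b));
  R_mul : forall a b, Rop (mul a b) = Rop (mul (Rop a) b);
  D_sandwich : forall a b, Dop (mul a b) = mul (mul (Dop a) (Dop (mul a b))) (Dop a);
  R_sandwich : forall a b, Rop (mul a b) = mul (mul (Rop b) (Rop (mul a b))) (Rop b);
  R_D : forall a, Rop (Dop a) = Dop a;
  D_R : forall a, Dop (Rop a) = Rop a
}.

Definition projection (S : DRCSemigroup) (p : S) : Prop := exists a : S, p = Dop S a.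

(* q theta_p = R(qp),  q delta_p = D(pq) *)
Definition theta (S : DRCSemigroup) (q p : S) : S := Rop S (mul S q p).
Definition delta (S : DRCSemigroup) (q p : S) : S := Dop S (mul S p q).

(* Main.v *)
Require Import Defs.
From Stdlib Require Import Setoid.

Section L.
Variable S : DRCSemigroup.
Local Notation "a * b" := (mul S a b).
Local Notation D := (Dop S).
Local Notation R := (Rop S).

Lemma proj_D (p : S) : projection S p -> D p = p.
Proof. intros [a ->]. rewrite <- (R_D S a) at 1. rewrite D_R. apply R_D. Qed.
Lemma proj_R (p : S) : projection S p -> R p = p.
Proof. intros [a ->]. apply R_D. Qed.
Lemma proj_idem (p : S) : projection S p -> p * p = p.
Proof. intros H. rewrite <- (proj_D p H) at 1. apply D_left_id. Qed.

Lemma eD (p q : S) : projection S p -> D (p * q) * p = D (p * q).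
Proof.
  intros Hp. rewrite (D_sandwich S p q), (proj_D p Hp).
  rewrite <- mul_assoc, proj_idem by assumption. reflexivity.
Qed.
Lemma pD (p q : S) : projection S p -> p * D (p * q) = D (p * q).
Proof.
  intros Hp. rewrite (D_sandwich S p q), (proj_D p Hp).
  rewrite !mul_assoc, proj_idem by assumption. reflexivity.
Qed.
Lemma fR (p q : S) : projection S q -> q * R (p * q) = R (p * q).
Proof.
  intros Hq. rewrite (R_sandwich S p q), (proj_R q Hq).
  rewrite !mul_assoc, proj_idem by assumption. reflexivity.
Qed.
Lemma Rf (p q : S) : projection S q -> R (p * q) * q = R (p * q).
Proof.
  intros Hq. rewrite (R_sandwich S p q), (proj_R q Hq).
  rewrite <- !mul_assoc, proj_idem by assumption. reflexivity.
Qed.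

Lemma decomp (p q : S) : projection S p -> projection S q ->
  p * q = D (p * q) * R (p * q).
Proof.
  intros Hp Hq.
  rewrite <- (eD p q Hp) at 1. rewrite <- mul_assoc.
  assert (E : p * R (p * q) = p * q).
  { rewrite <- (fR p q Hq), mul_assoc. apply R_right_id. }
  rewrite E. symmetry. apply D_left_id.
Qed.

Lemma comm_proj (p q : S) : projection S p -> projection S q ->
  p * q = q * p -> D (p * q) = p * q /\ R (p * q) = p * q.
Proof.
  intros Hp Hq C.
  assert (Hx : forall e, p * e * p = e -> q * e * q = e -> (p*q) * e * (p*q) = e).
  { intros e H1 H2. transitivity (p * (q * e * q) * p).
    - rewrite C at 2. rewrite !mul_assoc. reflexivity.
    - rewrite H2. exact H1. }
  split.
  - assert (H1 : p * D (p*q) * p = D (p*q)).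
    { rewrite pD, eD by assumption. reflexivity. }
    assert (H2 : q * D (p*q) * q = D (p*q)).
    { rewrite C. rewrite pD, eD by assumption. reflexivity. }
    rewrite <- (Hx _ H1 H2). rewrite <- mul_assoc, D_left_id.
    rewrite <- mul_assoc, (mul_assoc S q p q), <- C, mul_assoc, mul_assoc.
    rewrite proj_idem by assumption. rewrite <- mul_assoc, proj_idem by assumption.
    reflexivity.
  - assert (H2 : q * R (p*q) * q = R (p*q)).
    { rewrite fR, Rf by assumption. reflexivity. }
    assert (H1 : p * R (p*q) * p = R (p*q)).
    { rewrite C. rewrite fR, Rf by assumption. reflexivity. }
    rewrite <- (Hx _ H1 H2). rewrite R_right_id.
    rewrite <- mul_assoc, (mul_assoc S q p q), <- C, mul_assoc, mul_assoc.
    rewrite proj_idem by assumption. rewrite <- mul_assoc, proj_idem by assumption.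
    reflexivity.
Qed.
End L.

Theorem proposition10p1 (S : DRCSemigroup) (p q : S)
  (hp : projection S p) (hq : projection S q) :
  let pq := mul S p q in
  let qp := mul S q p in
  (* (i) <-> (ii) <-> (iii) <-> (iv) *)
  ((pq = qp) <-> (theta S p q = theta S q p /\ delta S p q = delta S q p)) /\
  ((theta S p q = theta S q p /\ delta S p q = delta S q p) <->
     (theta S p q = theta S q p /\ theta S q p = delta S p q /\ delta S p q = delta S q p)) /\
  ((theta S p q = theta S q p /\ theta S q p = delta S p q /\ delta S p q = delta S q p) <->
     (theta S p q = theta S q p /\ theta S q p = delta S p q /\ delta S p q = delta S q p
      /\ delta S q p = pq /\ pq = qp)).
Proof.
  intros pq qp. unfold pq, qp, theta, delta.
  assert (I2 : Rop S (mul S p q) = Rop S (mul S q p) -> Dop S (mul S q p) = Dop S (mul S p q) ->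
                mul S p q = mul S q p).
  { intros H1 H2. rewrite (decomp S p q hp hq), (decomp S q p hq hp), H1, H2.
    reflexivity. }
  assert (Cm : mul S p q = mul S q p ->
     Dop S (mul S p q) = mul S p q /\ Rop S (mul S p q) = mul S p q)
    by (intro C; apply comm_proj; assumption).
  split; [|split].
  - split.
    + intro C. rewrite C. auto.
    + intros [H1 H2]. auto.
  - split.
    + intros [H1 H2]. pose proof (I2 H1 H2) as C. destruct (Cm C) as [E1 E2].
      split; [assumption|split; [|assumption]].
      rewrite <- H1, H2, E1, E2. reflexivity.
    + intros [H1 [_ H2]]. auto.
  - split.
    + intros [H1 [H3 H2]]. pose proof (I2 H1 H2) as C. destruct (Cm C) as [E1 E2].
      repeat split; auto.
    + intros [H1 [H3 [H2 _]]]. auto.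
Qed.
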